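(* Let $\Omega=(0,L_x)\times(0,L_y)$ discretized by the cell-centered grid with $N_x,N_y$ cells of sizes $h_x=L_x/N_x$, $h_y=L_y/N_y$. Let $M>0$, $\beta>0$, $\alpha\ge 0$, $\Delta t>0$, $F(z)=z^4/4$. Given cell-centered grid functions $Z^{n-1},Z^n,\Psi^n$ and a scalar $R^n$ ($n\ge1$) with $E_1^h(\tilde Z^{n+1/2})>0$, consider the scheme: find grid functions $Z^{n+1},\Psi^{n+1},W^{n+1/2}$ and a scalar $R^{n+1}$ such that $$\Psi^{n+1}-\Psi^{n}+\beta\Delta t\Psi^{n+1/2}=M\Delta t\,\Delta_hW^{n+1/2},\qquad \Delta t\,\Psi^{n+1/2}=Z^{n+1}-Z^n,$$ $$W^{n+1/2}=\Delta_h^2Z^{n+1/2}+2\Delta_h\tilde{Z}^{n+1/2}+\alpha Z^{n+1/2}+\frac{R^{n+1/2}}{\sqrt{E_1^h(\tilde{Z}^{n+1/2})}}F'(\tilde{Z}^{n+1/2}),$$ $$R^{n+1}-R^n=\frac{1}{2\sqrt{E_1^h(\tilde{Z}^{n+1/2}) }}(F'(\tilde{Z}^{n+1/2}),Z^{n+1}-Z^n)_m,$$ with $f^{n+1/2}=(f^{n+1}+f^n)/2$ and $\tilde Z^{n+1/2}=(3Z^n-Z^{n-1})/2$, where all grid functions $Z$, $W$ and $\Delta_hZ$ are extended by the discrete homogeneous Neumann conditions $Z_{0,j}=Z_{1,j}$, $Z_{N_x+1,j}=Z_{N_x,j}$, $Z_{i,0}=Z_{i,1}$, $Z_{i,N_y+1}=Z_{i,N_y}$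 (and identically for $W$ and for $\Delta_hZ$). Then: (i) the scheme has a unique solution; (ii) if $(\Psi^n,1)_m=0$, then $(\Psi^{n+1},1)_m=0$ and $(Z^{n+1},1)_m=(Z^n,1)_m$ (so, if $(\Psi^0,1)_m=0$, mass is conserved at every step); (iii) under this mean-zero condition, $$\tilde{\mathcal{E}}_d(Z^{n+1},R^{n+1},\Psi^{n+1})-\tilde{\mathcal{E}}_d(Z^n,R^n,\Psi^n)\leq -\frac{\beta}{M}\Delta t\,\|\Psi^{n+1/2}\|_{-1}^2,$$ where $\tilde{\mathcal{E}}_d(Z^n,R^n,\Psi^n)=\mathcal{E}_d(Z^n,R^n,\Psi^n)+\frac 1 2\|\nabla_hZ^{n}-\nabla_hZ^{n-1}\|^2$.
   Context: Difference operators: $[d_xg]_{i+1/2,j}=(g_{i+1,j}-g_{i,j})/h_x$, $[d_yg]_{i,j+1/2}=(g_{i,j+1}-g_{i,j})/h_y$, $[D_xg]_{i,j}=(g_{i+1/2,j}-g_{i-1/2,j})/h_x$, $[D_yg]_{i,j}=(g_{i,j+1/2}-g_{i,j-1/2})/h_y$, $\Delta_hg=D_x(d_xg)+D_y(d_yg)$ at cell centers. Inner products: $(f,g)_m=\sum_{i=1}^{N_x}\sum_{j=1}^{N_y}h_xh_yf_{i,j}g_{i,j}$, $(f,g)_x=\sum_{i=1}^{N_x-1}\sum_{j=1}^{N_y}h_xh_yf_{i+1/2,j}g_{i+1/2,j}$, $(f,g)_y=\sum_{i=1}^{N_x}\sum_{j=1}^{N_y-1}h_xh_yf_{i,j+1/2}g_{i,j+1/2}$;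 $\|f\|_m^2=(f,f)_m$, $\|\nabla_hZ\|^2=(d_xZ,d_xZ)_x+(d_yZ,d_yZ)_y$. $E_1^h(Z)=\sum_{i,j}h_xh_yF(Z_{i,j})$. Discrete $H^{-1}$ norm: for $\phi$ with $(\phi,1)_m=0$, let $\eta_\phi$ with $(\eta_\phi,1)_m=0$ solve $-\Delta_h\eta_\phi=\phi$ under the discrete homogeneous Neumann extension; $(\phi_1,\phi_2)_{-1}=(d_x\eta_{\phi_1},d_x\eta_{\phi_2})_x+(d_y\eta_{\phi_1},d_y\eta_{\phi_2})_y$ and $\|\phi\|_{-1}=\sqrt{(\phi,\phi)_{-1}}$. Discrete pseudo energy: $\mathcal{E}_d(Z,R,\Psi)=\frac 1 2 \|\Delta_hZ\|_m^2-\|\nabla_hZ\|^2+\frac \alpha 2 \|Z\|_m^2+R^2+\frac{1}{2M}\|\Psi\|_{-1}^2$. *)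

(* Defs.v *)
From HB Require Import structures.
From mathcomp Require Import all_boot all_order all_algebra.
From mathcomp Require Import reals.
From Stdlib Require Import ClassicalEpsilon.

Set Implicit Arguments.
Unset Strict Implicit.
Unset Printing Implicit Defensive.

Import Order.TTheory GRing.Theory Num.Theory.
Local Open Scope ring_scope.

(* Cell-centred grid functions on an Nx x Ny grid are matrices 'M[R]_(Nx,Ny).
   Cells are indexed 0-based: the paper's cell (i,j), 1<=i<=Nx, is entry
   (i-1, j-1).  hx, hy are the mesh sizes. *)
Section Grid.
Variables (R : realType) (Nx Ny : nat).
Local Notation grid := 'M[R]_(Nx, Ny).

(* value of a grid function at nat indices (0 outside the grid; only used
   inside the grid below) *)
Definition gval (A : grid) (i j : nat) : R :=
  match (insub i : option 'I_Nx), (insub j : option 'I_Ny) with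
  | Some i', Some j' => A i' j'
  | _, _ => 0
  end.

(* Neumann extension: the ghost cell to the right of the last cell takes the
   value of the last cell (Z_{N+1} = Z_N); the ghost cell to the left of the
   first cell takes the value of the first one (Z_0 = Z_1), realised by the
   truncated predecessor i.-1. *)
Definition xnext (i : nat) : nat := minn i.+1 Nx.-1.
Definition ynext (j : nat) : nat := minn j.+1 Ny.-1.

Variables (hx hy : R).

Definition lap (A : grid) : grid :=
  \matrix_(i < Nx, j < Ny)
    (((gval A (xnext i) j - gval A i j) / hx
      - (gval A i j - gval A i.-1 j) / hx) / hx
   + ((gval A i (ynext j) - gval A i j) / hy
      - (gval A i j - gval A i j.-1) / hy) / hy).

Definition ipm (A B : grid) : R :=
  \sum_(i < Nx) \sum_(j < Ny) hx * hy * A i j * B i j.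

Definition normm2 (A : grid) : R := ipm A A.

Definition gradnorm2 (A : grid) : R :=
  \sum_(i < Nx.-1) \sum_(j < Ny)
      hx * hy * ((gval A i.+1 j - gval A i j) / hx) ^+ 2
  + \sum_(i < Nx) \sum_(j < Ny.-1)
      hx * hy * ((gval A i j.+1 - gval A i j) / hy) ^+ 2.

Definition ones : grid := const_mx 1.

Definition eta (phi : grid) : grid :=
  epsilon (inhabits 0) (fun e : grid => ipm e ones = 0 /\ - lap e = phi).

Definition hm1sq (phi : grid) : R := gradnorm2 (eta phi).

Definition F (z : R) : R := z ^+ 4 / 4%:R.
Definition dF (z : R) : R := z ^+ 3.

Definition E1 (A : grid) : R := \sum_(i < Nx) \sum_(j < Ny) hx * hy * F (A i j).

Variables (alpha M : R).

Definition Ed (Z : grid) (Rs : R) (Psi : grid) : R :=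
  2^-1 * normm2 (lap Z) - gradnorm2 Z + alpha / 2%:R * normm2 Z + Rs ^+ 2
  + (2%:R * M)^-1 * hm1sq Psi.

(* modified energy tilde E_d(Z^n, R^n, Psi^n), Zprev = Z^{n-1};
   ||grad Z^n - grad Z^{n-1}||^2 = gradnorm2 (Z^n - Z^{n-1}) by linearity *)
Definition Etilde (Z Zprev : grid) (Rs : R) (Psi : grid) : R :=
  Ed Z Rs Psi + 2^-1 * gradnorm2 (Z - Zprev).

Definition avg (A B : grid) : grid := 2^-1 *: (A + B).

Definition ztilde (Zprev Z : grid) : grid := 2^-1 *: (3%:R *: Z - Zprev).

Variables (beta dt : R).

(* The scheme, with Z0 = Z^{n-1}, Z1 = Z^n, Psi1 = Psi^n, R1 = R^n and
   unknowns Z2 = Z^{n+1}, Psi2 = Psi^{n+1}, W = W^{n+1/2}, R2 = R^{n+1}. *)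
Definition scheme (Z0 Z1 Psi1 : grid) (R1 : R)
    (Z2 Psi2 W : grid) (R2 : R) : Prop :=
  let Zt := ztilde Z0 Z1 in
  let Zh := avg Z2 Z1 in
  let Rh := 2^-1 * (R2 + R1) in
  [/\ Psi2 - Psi1 + (beta * dt) *: avg Psi2 Psi1 = (M * dt) *: lap W,
      dt *: avg Psi2 Psi1 = Z2 - Z1,
      W = lap (lap Zh) + 2%:R *: lap Zt + alpha *: Zh
          + (Rh / Num.sqrt (E1 Zt)) *: map_mx dF Zt
    & R2 - R1 = (2%:R * Num.sqrt (E1 Zt))^-1 * ipm (map_mx dF Zt) (Z2 - Z1)].

End Grid.

(* Main.v *)
Require Import Defs.
From HB Require Import structures.
From mathcomp Require Import all_boot all_order all_algebra.
From mathcomp Require Import reals.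

Set Warnings "-notation-overridden".
From mathcomp Require Import ring lra zify.

Import Order.TTheory GRing.Theory Num.Theory.
Local Open Scope ring_scope.

Section Aux.
Variables (R : realType) (Nx Ny : nat) (hx hy : R).
Local Notation grid := 'M[R]_(Nx, Ny).

Lemma gval_ord (A : grid) (i : 'I_Nx) (j : 'I_Ny) : gval A i j = A i j.
Proof. by rewrite /gval !valK. Qed.

Lemma gvalE (A : grid) i j (hi : (i < Nx)%N) (hj : (j < Ny)%N) :
  gval A i j = A (Ordinal hi) (Ordinal hj).
Proof. by rewrite -gval_ord. Qed.

Lemma gvalL (a : R) (A B : grid) i j :
  gval (a *: A + B) i j = a * gval A i j + gval B i j.
Proof.
rewrite /gval; case: (insub i : option 'I_Nx) => [i'|]; case: (insub j : option 'I_Ny) => [j'|];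
  rewrite ?mxE //; ring.
Qed.

Lemma gval0 i j : gval (0 : grid) i j = 0.
Proof.
rewrite /gval; case: (insub i : option 'I_Nx) => [i'|]; case: (insub j : option 'I_Ny) => [j'|];
  rewrite ?mxE //.
Qed.

Lemma gvalD (A B : grid) i j : gval (A + B) i j = gval A i j + gval B i j.
Proof. by have := gvalL 1 A B i j; rewrite scale1r mul1r. Qed.

Lemma gvalZ a (A : grid) i j : gval (a *: A) i j = a * gval A i j.
Proof. by have := gvalL a A 0 i j; rewrite !addr0 gval0 addr0. Qed.

Lemma gvalN (A : grid) i j : gval (- A) i j = - gval A i j.
Proof. by rewrite -scaleN1r gvalZ mulN1r. Qed.

Lemma gvalB (A B : grid) i j : gval (A - B) i j = gval A i j - gval B i j.
Proof. by rewrite gvalD gvalN. Qed.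

Lemma gval_const c i j : (i < Nx)%N -> (j < Ny)%N ->
  gval (const_mx c : grid) i j = c.
Proof. by move=> hi hj; rewrite (@gvalE _ i j hi hj) mxE. Qed.

Lemma lapL a (A B : grid) : lap hx hy (a *: A + B) = a *: lap hx hy A + lap hx hy B.
Proof. apply/matrixP => i j; rewrite !mxE !gvalL; ring. Qed.

Lemma lap0 : lap hx hy (0 : grid) = 0.
Proof. apply/matrixP => i j; rewrite !mxE !gval0; ring. Qed.

Lemma lapD (A B : grid) : lap hx hy (A + B) = lap hx hy A + lap hx hy B.
Proof. by have := lapL 1 A B; rewrite !scale1r. Qed.
Lemma lapZ a (A : grid) : lap hx hy (a *: A) = a *: lap hx hy A.
Proof. by have := lapL a A 0; rewrite !addr0 lap0 addr0. Qed.
Lemma lapN (A : grid) : lap hx hy (- A) = - lap hx hy A.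
Proof. by rewrite -scaleN1r lapZ scaleN1r. Qed.
Lemma lapB (A B : grid) : lap hx hy (A - B) = lap hx hy A - lap hx hy B.
Proof. by rewrite lapD lapN. Qed.

Lemma ipmL a (A B C : grid) :
  ipm hx hy (a *: A + B) C = a * ipm hx hy A C + ipm hx hy B C.
Proof.
rewrite /ipm mulr_sumr -big_split; apply: eq_bigr => i _.
rewrite mulr_sumr -big_split; apply: eq_bigr => j _ /=; rewrite !mxE; ring.
Qed.
Lemma ipmC (A B : grid) : ipm hx hy A B = ipm hx hy B A.
Proof.
by rewrite /ipm; apply: eq_bigr => i _; apply: eq_bigr => j _; ring.
Qed.
Lemma ipm0 (B : grid) : ipm hx hy 0 B = 0.
Proof.
rewrite /ipm big1 // => i _; rewrite big1 // => j _; rewrite mxE; ring.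
Qed.
Lemma ipmDl (A B C : grid) : ipm hx hy (A + B) C = ipm hx hy A C + ipm hx hy B C.
Proof. by have := ipmL 1 A B C; rewrite scale1r mul1r. Qed.
Lemma ipmZl a (A C : grid) : ipm hx hy (a *: A) C = a * ipm hx hy A C.
Proof. by have := ipmL a A 0 C; rewrite !addr0 ipm0 addr0. Qed.
Lemma ipmNl (A C : grid) : ipm hx hy (- A) C = - ipm hx hy A C.
Proof. by rewrite -scaleN1r ipmZl mulN1r. Qed.
Lemma ipmBl (A B C : grid) : ipm hx hy (A - B) C = ipm hx hy A C - ipm hx hy B C.
Proof. by rewrite ipmDl ipmNl. Qed.
Lemma ipmDr (A B C : grid) : ipm hx hy C (A + B) = ipm hx hy C A + ipm hx hy C B.
Proof. by rewrite ipmC ipmDl !(ipmC C). Qed.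
Lemma ipmZr a (A C : grid) : ipm hx hy C (a *: A) = a * ipm hx hy C A.
Proof. by rewrite ipmC ipmZl !(ipmC C). Qed.
Lemma ipmNr (A C : grid) : ipm hx hy C (- A) = - ipm hx hy C A.
Proof. by rewrite ipmC ipmNl !(ipmC C). Qed.
Lemma ipmBr (A B C : grid) : ipm hx hy C (A - B) = ipm hx hy C A - ipm hx hy C B.
Proof. by rewrite ipmC ipmBl !(ipmC C). Qed.
Lemma ipm0r (B : grid) : ipm hx hy B 0 = 0.
Proof. by rewrite ipmC ipm0. Qed.

Definition gradip (A B : grid) : R :=
  \sum_(i < Nx.-1) \sum_(j < Ny)
      hy / hx * ((gval A i.+1 j - gval A i j) * (gval B i.+1 j - gval B i j))
  + \sum_(i < Nx) \sum_(j < Ny.-1)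
      hx / hy * ((gval A i j.+1 - gval A i j) * (gval B i j.+1 - gval B i j)).

Lemma gradipL a (A B C : grid) :
  gradip (a *: A + B) C = a * gradip A C + gradip B C.
Proof.
rewrite /gradip mulrDr addrACA; congr (_ + _);
 rewrite mulr_sumr -big_split; apply: eq_bigr => i _;
 rewrite mulr_sumr -big_split; apply: eq_bigr => j _ /=; rewrite !gvalL; ring.
Qed.
Lemma gradipC (A B : grid) : gradip A B = gradip B A.
Proof.
by rewrite /gradip; congr (_ + _); apply: eq_bigr => i _; apply: eq_bigr => j _; ring.
Qed.
Lemma gradip0 (B : grid) : gradip 0 B = 0.
Proof.
rewrite /gradip !big1 ?addr0 // => i _; rewrite big1 // => j _; rewrite !gval0; ring.
Qed.
Lemma gradipDl (A B C : grid) : gradip (A + B) C = gradip A C + gradip B C.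
Proof. by have := gradipL 1 A B C; rewrite scale1r mul1r. Qed.
Lemma gradipZl a (A C : grid) : gradip (a *: A) C = a * gradip A C.
Proof. by have := gradipL a A 0 C; rewrite !addr0 gradip0 addr0. Qed.
Lemma gradipNl (A C : grid) : gradip (- A) C = - gradip A C.
Proof. by rewrite -scaleN1r gradipZl mulN1r. Qed.
Lemma gradipBl (A B C : grid) : gradip (A - B) C = gradip A C - gradip B C.
Proof. by rewrite gradipDl gradipNl. Qed.
Lemma gradipDr (A B C : grid) : gradip C (A + B) = gradip C A + gradip C B.
Proof. by rewrite gradipC gradipDl !(gradipC C). Qed.
Lemma gradipZr a (A C : grid) : gradip C (a *: A) = a * gradip C A.
Proof. by rewrite gradipC gradipZl !(gradipC C). Qed.
Lemma gradipNr (A C : grid) : gradip C (- A) = - gradip C A.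
Proof. by rewrite gradipC gradipNl !(gradipC C). Qed.
Lemma gradipBr (A B C : grid) : gradip C (A - B) = gradip C A - gradip C B.
Proof. by rewrite gradipC gradipBl !(gradipC C). Qed.

Lemma sbp (N : nat) (a b : nat -> R) : (0 < N)%N ->
  \sum_(i < N) ((a (minn i.+1 N.-1) - a i) - (a i - a i.-1)) * b i
  = - \sum_(i < N.-1) (a i.+1 - a i) * (b i.+1 - b i).
Proof.
case: N => [//|n] _ /=.
have -> : \sum_(i < n.+1) ((a (minn i.+1 n) - a i) - (a i - a i.-1)) * b i
  = \sum_(i < n.+1) (a (minn i.+1 n) - a i) * b i
    - \sum_(i < n.+1) (a i - a i.-1) * b i.
  by rewrite -sumrB; apply: eq_bigr => i _; ring.
rewrite big_ord_recr big_ord_recl /= (minn_idPr (leqnSn n)) subrr mul0r addr0 subrr mul0r add0r.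
rewrite -sumrB -sumrN; apply: eq_bigr => i _ /=.
have -> : minn i.+1 n = i.+1 by apply/minn_idPl; exact: ltn_ord.
ring.
Qed.


Hypotheses (hx0 : 0 < hx) (hy0 : 0 < hy) (Nx0 : (0 < Nx)%N) (Ny0 : (0 < Ny)%N).

Lemma gradnorm2E (A : grid) : gradnorm2 hx hy A = gradip A A.
Proof.
have hxn : hx != 0 by rewrite gt_eqF.
have hyn : hy != 0 by rewrite gt_eqF.
rewrite /gradnorm2 /gradip; congr (_ + _); apply: eq_bigr => i _;
 apply: eq_bigr => j _; field; rewrite ?hxn ?hyn //.
Qed.

Lemma lap_ipm (A B : grid) : ipm hx hy (lap hx hy A) B = - gradip A B.
Proof.
have hxn : hx != 0 by rewrite gt_eqF.
have hyn : hy != 0 by rewrite gt_eqF.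
have E : forall i : 'I_Nx, forall j : 'I_Ny,
   hx * hy * lap hx hy A i j * B i j
   = hy / hx * (((gval A (minn i.+1 Nx.-1) j - gval A i j) -
                (gval A i j - gval A i.-1 j)) * gval B i j)
   + hx / hy * (((gval A i (minn j.+1 Ny.-1) - gval A i j) -
                (gval A i j - gval A i j.-1)) * gval B i j).
  move=> i j; rewrite mxE -gval_ord /xnext /ynext; field; rewrite ?hxn ?hyn //.
rewrite /ipm.
under eq_bigr => i _ do under eq_bigr => j _ do rewrite E.
under eq_bigr => i _ do rewrite big_split /=.
rewrite big_split /= /gradip opprD; congr (_ + _).
  rewrite exchange_big /= [in RHS]exchange_big /= -sumrN; apply: eq_bigr => j _.
  rewrite -mulr_sumr (@sbp _ (fun k => gval A k j) (fun k => gval B k j) Nx0).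
  by rewrite mulrN mulr_sumr.
rewrite -sumrN; apply: eq_bigr => i _.
rewrite -mulr_sumr (@sbp _ (fun k => gval A i k) (fun k => gval B i k) Ny0).
by rewrite mulrN mulr_sumr.
Qed.


Lemma ipm_lap_sym (A B : grid) : ipm hx hy A (lap hx hy B) = ipm hx hy (lap hx hy A) B.
Proof. by rewrite ipmC !lap_ipm gradipC. Qed.

Lemma gradip_ones (A : grid) : gradip A (ones R Nx Ny) = 0.
Proof.
rewrite /gradip !big1 ?addr0 // => i _; rewrite big1 // => j _.
  rewrite !gval_const ?subrr ?mulr0 //; by case: i j => [i hi] [j hj] /=; lia.
rewrite !gval_const ?subrr ?mulr0 //; by case: i j => [i hi] [j hj] /=; lia.
Qed.

Lemma lap_ones (A : grid) : ipm hx hy (lap hx hy A) (ones R Nx Ny) = 0.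
Proof. by rewrite lap_ipm gradip_ones oppr0. Qed.

Lemma dsum0 (m n : nat) (F : 'I_m -> 'I_n -> R) :
  (forall i j, 0 <= F i j) -> \sum_(i < m) \sum_(j < n) F i j = 0 ->
  forall i j, F i j = 0.
Proof.
move=> F0 S i j.
have Si : \sum_(j < n) F i j = 0.
  apply: (@psumr_eq0P _ _ xpredT (fun i => \sum_(j < n) F i j) _ S i isT).
  by move=> k _; apply: sumr_ge0 => l _.
by apply: (@psumr_eq0P _ _ xpredT (F i)).
Qed.

Lemma dsum_ge0 (m n : nat) (F : 'I_m -> 'I_n -> R) :
  (forall i j, 0 <= F i j) -> 0 <= \sum_(i < m) \sum_(j < n) F i j.
Proof. by move=> F0; apply: sumr_ge0 => i _; apply: sumr_ge0 => j _. Qed.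

Lemma term_ge0 (h d : R) : 0 < h -> 0 <= hx * hy * (d / h) ^+ 2.
Proof. by move=> _; rewrite mulr_ge0 ?sqr_ge0 // mulr_ge0 // ltW. Qed.

Lemma term_eq0 (h d : R) : 0 < h -> hx * hy * (d / h) ^+ 2 = 0 -> d = 0.
Proof.
move=> h0 /eqP; rewrite mulf_eq0 mulf_eq0 (gt_eqF hx0) (gt_eqF hy0) /= sqrf_eq0 mulf_eq0 invr_eq0 (gt_eqF h0).
by rewrite orbF => /eqP.
Qed.

Lemma gradnorm2_ge0 (A : grid) : 0 <= gradnorm2 hx hy A.
Proof.
by rewrite /gradnorm2 addr_ge0 // dsum_ge0 // => i j; apply: term_ge0; [exact: hx0|exact: hy0].
Qed.

Lemma normm2_ge0 (A : grid) : 0 <= normm2 hx hy A.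
Proof.
rewrite /normm2 /ipm dsum_ge0 // => i j.
by rewrite -mulrA; apply: mulr_ge0; [apply: mulr_ge0; apply: ltW|rewrite -expr2 sqr_ge0].
Qed.

Lemma normm2_eq0 (A : grid) : normm2 hx hy A = 0 -> A = 0.
Proof.
move=> H; apply/matrixP => i j; rewrite mxE.
have F0 : forall k l, 0 <= hx*hy*A k l*A k l.
  by move=> k l; rewrite -mulrA; apply: mulr_ge0; [apply: mulr_ge0; apply: ltW|rewrite -expr2 sqr_ge0].
have := @dsum0 Nx Ny (fun i j => hx*hy*A i j*A i j) F0 H i j.
move/eqP; rewrite -mulrA mulf_eq0 mulf_eq0 (gt_eqF hx0) (gt_eqF hy0) /= -expr2 sqrf_eq0.
by move/eqP.
Qed.

Lemma gradnorm2_const (e : grid) : gradnorm2 hx hy e = 0 ->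
  forall i j, (i < Nx)%N -> (j < Ny)%N -> gval e i j = gval e 0 0.
Proof.
move=> H.
have [HX HY] : (\sum_(i < Nx.-1) \sum_(j < Ny)
      hx * hy * ((gval e i.+1 j - gval e i j) / hx) ^+ 2 = 0) /\
   (\sum_(i < Nx) \sum_(j < Ny.-1)
      hx * hy * ((gval e i j.+1 - gval e i j) / hy) ^+ 2 = 0).
  have h1 := @dsum_ge0 Nx.-1 Ny (fun i j => hx * hy * ((gval e i.+1 j - gval e i j) / hx) ^+ 2)
     (fun i j => @term_ge0 hx _ hx0).
  have h2 := @dsum_ge0 Nx Ny.-1 (fun i j => hx * hy * ((gval e i j.+1 - gval e i j) / hy) ^+ 2)
     (fun i j => @term_ge0 hy _ hy0).
  move: H h1 h2; rewrite /gradnorm2.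
  move: (\sum_(i < Nx.-1) _) (\sum_(i < Nx) _) => X Y H h1 h2; split; lra.
have dX := @dsum0 _ _ _ (fun i j => @term_ge0 hx _ hx0) HX.
have dY := @dsum0 _ _ _ (fun i j => @term_ge0 hy _ hy0) HY.
have ex : forall i j, (i < Nx)%N -> (j < Ny)%N -> gval e i j = gval e 0 j.
  move=> i j + hj; elim: i => [//|i IH] hi.
  have hi' : (i < Nx.-1)%N by clear -hi; lia.
  have := dX (Ordinal hi') (Ordinal hj) => /= /(@term_eq0 hx _ hx0) /eqP.
  by rewrite subr_eq0 => /eqP ->; apply: IH; exact: ltnW.
have ey : forall j, (j < Ny)%N -> gval e 0 j = gval e 0 0.
  elim=> [//|j IH] hj.
  have hj' : (j < Ny.-1)%N by clear -hj; lia.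
  have := dY (Ordinal Nx0) (Ordinal hj') => /= /(@term_eq0 hy _ hy0) /eqP.
  by rewrite subr_eq0 => /eqP ->; apply: IH; exact: ltnW.
by move=> i j hi hj; rewrite ex // ey.
Qed.

Lemma ipm_const_ones c : ipm hx hy (const_mx c) (ones R Nx Ny) = c * (hx * hy * Nx%:R * Ny%:R).
Proof.
rewrite /ipm (_ : \sum_(i < Nx) _ = \sum_(i < Nx) \sum_(j < Ny) (c * hx * hy)).
  rewrite sumr_const card_ord sumr_const card_ord.
  by rewrite -[c * hx * hy *+ Ny]mulr_natr -[(_ * _) *+ Nx]mulr_natr; ring.
by apply: eq_bigr => i _; apply: eq_bigr => j _; rewrite !mxE; ring.
Qed.

Lemma kerK (e : grid) : lap hx hy e = 0 -> ipm hx hy e (ones R Nx Ny) = 0 -> e = 0.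
Proof.
move=> L0 M0.
have G : gradnorm2 hx hy e = 0.
  by rewrite gradnorm2E -[LHS]opprK -lap_ipm L0 ipm0 oppr0.
have ec : e = const_mx (gval e 0 0).
  apply/matrixP => i j; rewrite mxE -gval_ord; apply: gradnorm2_const => //.
move: M0; rewrite ec ipm_const_ones => /eqP; rewrite mulf_eq0 => /orP [/eqP -> //|].
by rewrite !mulf_eq0 !gt_eqF // ltr0n.
Qed.


Lemma gradnorm2_ipm (A : grid) : gradnorm2 hx hy A = - ipm hx hy (lap hx hy A) A.
Proof. by rewrite gradnorm2E lap_ipm opprK. Qed.

Lemma ipm_ones_pos : 0 < ipm hx hy (ones R Nx Ny) (ones R Nx Ny).
Proof.
rewrite /ones ipm_const_ones mul1r !mulr_gt0 // ltr0n //.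
Qed.

End Aux.

Lemma inj_surj (K : fieldType) (m n : nat) (f : 'M[K]_(m,n) -> 'M[K]_(m,n))
  (fL : forall a x y, f (a *: x + y) = a *: f x + f y) :
  injective f -> forall v, exists u, f u = v.
Proof.
move=> finj v.
pose g : {linear 'M[K]_(m,n) -> 'M[K]_(m,n)} :=
  HB.pack f (GRing.isLinear.Build K _ _ *:%R f fL).
have gE : linfun g =1 f by move=> x; rewrite lfunE.
have k0 : lker (linfun g) == 0%VS.
  by apply/lker0P => x y; rewrite !gE; apply: finj.
exists ((linfun g)^-1%VF v).
by rewrite -gE lker0_lfunVK.
Qed.

Lemma linear_inj (K : fieldType) (m n : nat) (f : 'M[K]_(m,n) -> 'M[K]_(m,n))
  (fL : forall a x y, f (a *: x + y) = a *: f x + f y) :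
  (forall x, f x = 0 -> x = 0) -> injective f.
Proof.
move=> f0 x y fxy; apply/eqP; rewrite -subr_eq0; apply/eqP; apply: f0.
have := fL (-1) y x; rewrite !scaleN1r fxy addNr (addrC (-y)) => ->.
by [].
Qed.

From Stdlib Require Import ClassicalEpsilon.

Section Eta.
Variables (R : realType) (Nx Ny : nat) (hx hy : R).
Local Notation grid := 'M[R]_(Nx, Ny).
Hypotheses (hx0 : 0 < hx) (hy0 : 0 < hy) (Nx0 : (0 < Nx)%N) (Ny0 : (0 < Ny)%N).
Local Notation o := (ones R Nx Ny).

Lemma eta_exists (phi : grid) : ipm hx hy phi o = 0 ->
  exists e : grid, ipm hx hy e o = 0 /\ - lap hx hy e = phi.
Proof.
move=> P0.
pose T (x : grid) := - lap hx hy x + ipm hx hy x o *: o.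
have TL : forall a x y, T (a *: x + y) = a *: T x + T y.
  move=> a x y; rewrite /T lapL ipmL.
  move: (lap hx hy x) (lap hx hy y) (ipm hx hy x o) (ipm hx hy y o) => u v q r.
  by apply/matrixP => i j; rewrite !mxE; ring.
have mT : forall x, ipm hx hy (T x) o = ipm hx hy x o * ipm hx hy o o.
  by move=> x; rewrite /T ipmDl ipmNl lap_ones // oppr0 add0r ipmZl.
have Tinj : injective T.
  apply: linear_inj TL _ => x Tx0.
  have m0 : ipm hx hy x o = 0.
    have := mT x; rewrite Tx0 ipm0 => /esym /eqP; rewrite mulf_eq0 (gt_eqF (@ipm_ones_pos R Nx Ny hx hy hx0 hy0 Nx0 Ny0)) //.
    by rewrite orbF => /eqP.
  apply: (@kerK R Nx Ny hx hy hx0 hy0 Nx0 Ny0) => //.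
  by move: Tx0; rewrite /T m0 scale0r addr0 => /eqP; rewrite oppr_eq0 => /eqP.
have [u Tu] := @inj_surj R Nx Ny T TL Tinj phi.
have m0 : ipm hx hy u o = 0.
  have := mT u; rewrite Tu P0 => /esym /eqP; rewrite mulf_eq0 (gt_eqF (@ipm_ones_pos R Nx Ny hx hy hx0 hy0 Nx0 Ny0)) //.
  by rewrite orbF => /eqP.
by exists u; split => //; move: Tu; rewrite /T m0 scale0r addr0.
Qed.

Lemma eta_spec (phi : grid) : ipm hx hy phi o = 0 ->
  ipm hx hy (Defs.eta hx hy phi) o = 0 /\ - lap hx hy (Defs.eta hx hy phi) = phi.
Proof.
move=> P0; have H := (epsilon_spec (inhabits 0) (fun e : grid => ipm hx hy e o = 0 /\ - lap hx hy e = phi) (eta_exists phi P0)); exact H.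
Qed.

Lemma eta_uniq (phi e : grid) : ipm hx hy phi o = 0 ->
  ipm hx hy e o = 0 -> - lap hx hy e = phi -> e = Defs.eta hx hy phi.
Proof.
move=> P0 e0 le; have [f0 lf] := eta_spec phi P0.
apply/eqP; rewrite -subr_eq0; apply/eqP; apply: (@kerK R Nx Ny hx hy hx0 hy0 Nx0 Ny0).
  by apply/eqP; rewrite lapB subr_eq0 -eqr_opp le lf.
by rewrite ipmBl e0 f0 subrr.
Qed.

Lemma hm1sqE (phi : grid) : ipm hx hy phi o = 0 ->
  hm1sq hx hy phi = ipm hx hy phi (Defs.eta hx hy phi).
Proof.
move=> P0; have [_ lf] := eta_spec phi P0.
by rewrite /hm1sq gradnorm2_ipm // -ipmNl lf.
Qed.

End Eta.

Section Main.
Variables (R : realType) (Nx Ny : nat) (hx hy alpha M beta dt : R).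
Local Notation grid := 'M[R]_(Nx, Ny).
Variables (Z0 Z1 Psi1 : grid) (R1 : R).
Hypotheses (hx0 : 0 < hx) (hy0 : 0 < hy) (Nx0 : (0 < Nx)%N) (Ny0 : (0 < Ny)%N).
Hypotheses (M0 : 0 < M) (b0 : 0 < beta) (a0 : 0 <= alpha) (dt0 : 0 < dt).
Hypothesis (E0 : 0 < E1 hx hy (ztilde Z0 Z1)).
Local Notation o := (ones R Nx Ny).
Local Notation ipm := (ipm hx hy).
Local Notation lap := (lap hx hy).

Let lapI := @lap_ipm R Nx Ny hx hy hx0 hy0 Nx0 Ny0.
Let lapS := @ipm_lap_sym R Nx Ny hx hy hx0 hy0 Nx0 Ny0.
Let etaS := @eta_spec R Nx Ny hx hy hx0 hy0 Nx0 Ny0.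
Let etaU := @eta_uniq R Nx Ny hx hy hx0 hy0 Nx0 Ny0.
Let hmE := @hm1sqE R Nx Ny hx hy hx0 hy0 Nx0 Ny0.
Let gnE := @gradnorm2E R Nx Ny hx hy hx0 hy0.
Let iC := @ipmC R Nx Ny hx hy.
Let gC := @gradipC R Nx Ny hx hy.
Local Notation G := (gradip R Nx Ny hx hy).

Lemma energy (Z2 Psi2 W : grid) (R2 : R) :
  scheme hx hy alpha M beta dt Z0 Z1 Psi1 R1 Z2 Psi2 W R2 ->
  ipm Psi1 o = 0 ->
  [/\ ipm Psi2 o = 0, ipm Z2 o = ipm Z1 o
    & Etilde hx hy alpha M Z2 Z1 R2 Psi2 - Etilde hx hy alpha M Z1 Z0 R1 Psi1
      <= - (beta / M) * dt * hm1sq hx hy (avg Psi2 Psi1)].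
Proof.
rewrite /scheme /= => -[e1 e2 e3 e4] m1.
set Zt := ztilde Z0 Z1 in e3 e4 *.
set s := Num.sqrt (E1 hx hy Zt) in e3 e4.
set g := map_mx (@dF R) Zt in e3 e4.
have s0 : 0 < s by rewrite sqrtr_gt0.
set P := avg Psi2 Psi1 in e1 e2 *.
have bd0 : 0 < beta * dt by rewrite mulr_gt0.
have m2 : ipm Psi2 o = 0.
  have := congr1 (fun X => ipm X o) e1 => /=.
  rewrite ipmZl lap_ones // mulr0 ipmDl ipmBl ipmZl /P /avg ipmZl ipmDl m1.
  move: (ipm Psi2 o) (beta * dt) bd0 => m q q0 H.
  have : m * (2 + q) = 0 by nra.
  by move/eqP; rewrite mulf_eq0 => /orP [/eqP //|]; rewrite gt_eqF //; lra.
have mP : ipm P o = 0 by rewrite /P /avg ipmZl ipmDl m1 m2 addr0 mulr0.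
have mZ : ipm Z2 o = ipm Z1 o.
  apply/eqP; rewrite -subr_eq0 -ipmBl -e2 ipmZl mP mulr0 //.
split => //.
have [f1 l1] := etaS Psi1 m1.
have [f2 l2] := etaS Psi2 m2.
set n1 := Defs.eta hx hy Psi1 in f1 l1 *.
set n2 := Defs.eta hx hy Psi2 in f2 l2 *.
have nP : Defs.eta hx hy P = avg n2 n1.
  apply/esym/etaU => //.
    by rewrite /avg ipmZl ipmDl f1 f2 addr0 mulr0.
  by rewrite /P /avg -l1 -l2 lapZ lapD -scalerN opprD.
rewrite /Etilde /Ed (hmE _ mP) nP (hmE _ m1) (hmE _ m2) -/n1 -/n2.
have cross : ipm Psi2 n1 = ipm Psi1 n2.
  by rewrite -l1 -l2 !ipmNl !lapI gC.
have r1 : ipm Psi2 n2 - ipm Psi1 n1 + 2%:R * (beta * dt) * ipm P (avg n2 n1)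
          = - 2%:R * M * ipm W (Z2 - Z1).
  have := congr1 (fun X => ipm X (avg n2 n1)) e1 => /=.
  rewrite ipmZl -lapS -[lap (avg n2 n1)]opprK -nP (proj2 (etaS P mP)) nP.
  rewrite -e2 ipmZr ipmNr ipmDl ipmBl ipmZl.
  rewrite /avg !ipmZr !ipmDr cross => H.
  have -> : ipm Psi2 n2 - ipm Psi1 n1 = 2%:R * (2^-1 * (ipm Psi2 n2 + ipm Psi1 n2) - 2^-1 * (ipm Psi1 n2 + ipm Psi1 n1)) by field.
  rewrite -mulrA -mulrDr H; ring.
have eg : ipm g (Z2 - Z1) = 2%:R * s * (R2 - R1).
  by rewrite e4; field; rewrite gt_eqF.
have wd : ipm W (Z2 - Z1) =
    2^-1 * (ipm (lap Z2) (lap Z2) - ipm (lap Z1) (lap Z1))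
    - (3%:R * G Z2 Z1 - 3%:R * G Z1 Z1 - G Z2 Z0 + G Z1 Z0)
    + alpha / 2%:R * (ipm Z2 Z2 - ipm Z1 Z1) + (R2 ^+ 2 - R1 ^+ 2).
  rewrite e3 !ipmDl !ipmZl eg (lapI Zt) -(lapS (lap (avg Z2 Z1))).
  rewrite /Zt /ztilde /avg lapZ lapD lapB.
  rewrite ?ipmZl ?ipmDl ?ipmBr ?ipmDr ?ipmZr ?ipmDl ?ipmZl ?gradipZl ?gradipBl ?gradipZl ?gradipBr ?gradipZr.
  rewrite (iC (lap Z1) (lap Z2)) (iC Z1 Z2) (gC Z1 Z2) (gC Z0 Z2) (gC Z0 Z1).
  by field; rewrite gt_eqF.
have M0' : M != 0 by rewrite gt_eqF.
have r1' : (2%:R * M)^-1 * ipm Psi2 n2 - (2%:R * M)^-1 * ipm Psi1 n1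
     = - ipm W (Z2 - Z1) - beta / M * dt * ipm P (avg n2 n1).
  have -> : (2%:R * M)^-1 * ipm Psi2 n2 - (2%:R * M)^-1 * ipm Psi1 n1
     = (2%:R * M)^-1 * (ipm Psi2 n2 - ipm Psi1 n1 + 2%:R * (beta * dt) * ipm P (avg n2 n1))
       - beta / M * dt * ipm P (avg n2 n1) by field.
  by rewrite r1; field.
have gn := @gradnorm2_ge0 R Nx Ny hx hy hx0 hy0 (Z2 - 2%:R *: Z1 + Z0).
rewrite gnE ?gradipDl ?gradipBl ?gradipNl ?gradipDr ?gradipBr ?gradipNr ?gradipZl ?gradipZr in gn.
rewrite ?(gC Z1 Z2) ?(gC Z0 Z2) ?(gC Z0 Z1) in gn.
rewrite /normm2 !gnE ?gradipBl ?gradipBr ?(gC Z1 Z2) ?(gC Z0 Z1).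
rewrite !mulNr.
move: wd r1' gn.
move: (ipm W (Z2 - Z1)) (ipm (lap Z2) (lap Z2)) (ipm (lap Z1) (lap Z1)) (ipm Z2 Z2) (ipm Z1 Z1).
move: (G Z2 Z2) (G Z1 Z1) (G Z0 Z0) (G Z2 Z1) (G Z2 Z0) (G Z1 Z0).
move: ((2%:R * M)^-1 * ipm Psi2 n2) ((2%:R * M)^-1 * ipm Psi1 n1) (beta / M * dt * ipm P (avg n2 n1)).
move=> h2 h1 hP g22 g11 g00 g21 g20 g10 w l22 l11 z22 z11 Hw Hr Hg.
lra.
Qed.

Let Zt := ztilde Z0 Z1.
Let s := Num.sqrt (E1 hx hy Zt).
Let g := map_mx (@dF R) Zt.
Let s0 : 0 < s. Proof. by rewrite /s sqrtr_gt0. Qed.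
Let sn0 : s != 0. Proof. by rewrite gt_eqF. Qed.
Let dtn0 : dt != 0. Proof. by rewrite gt_eqF. Qed.

Definition Lop (x : grid) : grid :=
  2^-1 *: lap (lap x) + (alpha / 2%:R) *: x + ((4%:R * (s * s))^-1 * ipm g x) *: g.
Definition W0 : grid := lap (lap Z1) + 2%:R *: lap Zt + alpha *: Z1 + (R1 / s) *: g.
Definition Lin (x : grid) : grid := (2%:R / dt + beta) *: x - (M * dt) *: lap (Lop x).
Definition bvec : grid := 2%:R *: Psi1 + (M * dt) *: lap W0.

Lemma LopL a x y : Lop (a *: x + y) = a *: Lop x + Lop y.
Proof.
rewrite /Lop !lapL ipmDr ipmZr.
move: (lap (lap x)) (lap (lap y)) (ipm g x) (ipm g y) => u v p q.
by apply/matrixP => i j; rewrite !mxE; ring.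
Qed.

Lemma LinL a x y : Lin (a *: x + y) = a *: Lin x + Lin y.
Proof.
rewrite /Lin LopL lapL.
move: (lap (Lop x)) (lap (Lop y)) => u v.
by apply/matrixP => i j; rewrite !mxE; ring.
Qed.


Let lD := @lapD R Nx Ny hx hy.
Let lZ := @lapZ R Nx Ny hx hy.
Let nm0 := @normm2_ge0 R Nx Ny hx hy hx0 hy0.
Let nmE := @normm2_eq0 R Nx Ny hx hy hx0 hy0.
Let gn0 := @gradnorm2_ge0 R Nx Ny hx hy hx0 hy0.
Let lapO := @lap_ones R Nx Ny hx hy hx0 hy0 Nx0 Ny0.
Let kK := @kerK R Nx Ny hx hy hx0 hy0 Nx0 Ny0.

Lemma Lin_inj0 x : Lin x = 0 -> x = 0.
Proof.
move=> /eqP; rewrite /Lin subr_eq0 => /eqP H.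
have c10 : 0 < 2%:R / dt + beta by rewrite addr_gt0 // divr_gt0.
have c20 : 0 < M * dt by rewrite mulr_gt0.
have k0 : 0 <= (4%:R * (s * s))^-1 by rewrite invr_ge0 mulr_ge0 // mulr_ge0 // ltW.
have e1 := congr1 (fun X => ipm X (Lop x)) H => /=.
rewrite ipmZl ipmZl lapI -gnE in e1.
have ex : ipm x (Lop x) = 2^-1 * normm2 hx hy (lap x) + alpha / 2%:R * normm2 hx hy x
                          + (4%:R * (s * s))^-1 * (ipm g x) ^+ 2.
  rewrite /Lop !ipmDr !ipmZr lapS (iC x g) /normm2; ring.
have N0 := nm0 (lap x); have n0 := nm0 x; have G0 := gn0 (Lop x).
have an : 0 <= alpha / 2%:R * normm2 hx hy x by rewrite mulr_ge0 // divr_ge0.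
have kq : 0 <= (4%:R * (s * s))^-1 * (ipm g x) ^+ 2 by rewrite mulr_ge0 // sqr_ge0.
have S0 : ipm x (Lop x) = 0.
  have Sge : 0 <= ipm x (Lop x) by rewrite ex; lra.
  have : (2%:R / dt + beta) * ipm x (Lop x) <= 0.
    rewrite e1 mulrN oppr_le0; exact: mulr_ge0 (ltW c20) G0.
  rewrite pmulr_rle0 // => Sle; lra.
have Lx0 : lap x = 0.
  apply: nmE; move: S0; rewrite ex => S0; lra.
apply: kK => //.
have e2 := congr1 (fun X => ipm X o) H => /=.
move: e2; rewrite !ipmZl lapO mulr0 => /eqP; rewrite mulf_eq0 gt_eqF //= => /eqP //.
Qed.


Lemma addKr' (A B : grid) : A + B - A = B.
Proof. by rewrite addrC addKr. Qed.

Lemma scheme_of x : Lin x = bvec ->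
  scheme hx hy alpha M beta dt Z0 Z1 Psi1 R1 (Z1 + x) ((2%:R / dt) *: x - Psi1)
    (W0 + Lop x) (R1 + (2%:R * s)^-1 * ipm g x).
Proof.
move=> H; rewrite /scheme /= -/Zt -/s -/g addKr'.
have avZ : avg (Z1 + x) Z1 = Z1 + 2^-1 *: x.
  by apply/matrixP => i j; rewrite !mxE; field.
split.
- rewrite (lD W0 (Lop x)).
  match goal with |- ?L = ?Rr => have E : L - Rr = Lin x - bvec end.
    rewrite /Lin /bvec.
    move: (lap W0) (lap (Lop x)) => u v.
    by apply/matrixP => i j; rewrite !mxE; field.
  by apply/eqP; rewrite -subr_eq0 E H subrr.
- by apply/matrixP => i j; rewrite !mxE; field.
- rewrite avZ /W0 /Lop (lD Z1) (lZ _ x) (lD (lap Z1)) (lZ _ (lap x)).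
  move: (lap (lap Z1)) (lap (lap x)) (lap Zt) (ipm g x) => u v w q.
  by apply/matrixP => i j; rewrite !mxE; field.
- ring.
Qed.

Lemma of_scheme Z2 Psi2 W R2 :
  scheme hx hy alpha M beta dt Z0 Z1 Psi1 R1 Z2 Psi2 W R2 ->
  [/\ Lin (Z2 - Z1) = bvec, Psi2 = (2%:R / dt) *: (Z2 - Z1) - Psi1,
      W = W0 + Lop (Z2 - Z1) & R2 = R1 + (2%:R * s)^-1 * ipm g (Z2 - Z1)].
Proof.
rewrite /scheme /= -/Zt -/s -/g => -[e1 e2 e3 e4].
have eR : R2 = R1 + (2%:R * s)^-1 * ipm g (Z2 - Z1) by rewrite -e4; ring.
have eP : Psi2 = (2%:R / dt) *: (Z2 - Z1) - Psi1.
  rewrite -e2; by apply/matrixP => i j; rewrite !mxE; field.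
have [x ex] : exists x, Z2 = Z1 + x by exists (Z2 - Z1); rewrite addrC subrK.
rewrite ex addKr' in eR eP *.
have avZ : avg (Z1 + x) Z1 = Z1 + 2^-1 *: x.
  by apply/matrixP => i j; rewrite !mxE; field.
have eW : W = W0 + Lop x.
  rewrite e3 ex avZ eR /W0 /Lop (lD Z1) (lZ _ x) (lD (lap Z1)) (lZ _ (lap x)).
  move: (lap (lap Z1)) (lap (lap x)) (lap Zt) (ipm g x) => u v w q.
  by apply/matrixP => i j; rewrite !mxE; field.
split => //.
rewrite eP eW (lD W0 (Lop x)) in e1.
match type of e1 with ?L = ?Rr => have E : Lin x - bvec = L - Rr end.
  rewrite /Lin /bvec.
  move: (lap W0) (lap (Lop x)) => u v.
  by apply/matrixP => i j; rewrite !mxE; field.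
by apply/eqP; rewrite -subr_eq0 E e1 subrr.
Qed.


Lemma part_i : exists! t : grid * grid * grid * R,
  scheme hx hy alpha M beta dt Z0 Z1 Psi1 R1 t.1.1.1 t.1.1.2 t.1.2 t.2.
Proof.
have Linj := @linear_inj R Nx Ny Lin LinL Lin_inj0.
have [x Hx] := @inj_surj R Nx Ny Lin LinL Linj bvec.
exists (Z1 + x, (2%:R / dt) *: x - Psi1, W0 + Lop x, R1 + (2%:R * s)^-1 * ipm g x).
split; first exact: scheme_of x Hx.
case=> [[[Z2 Psi2] W] R2] /= Hs.
have [e1 e2 e3 e4] := of_scheme Z2 Psi2 W R2 Hs.
have ex : Z2 - Z1 = x by apply: Linj; rewrite e1 Hx.
have eZ : Z2 = Z1 + x by rewrite -ex addrC subrK.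
by rewrite e2 e3 e4 ex -eZ.
Qed.

End Main.

Theorem theorem3p2 (R : realType) (Lx Ly : R) (Nx Ny : nat)
    (M beta alpha dt : R) (Z0 Z1 Psi1 : 'M[R]_(Nx, Ny)) (R1 : R) :
  0 < Lx -> 0 < Ly -> (0 < Nx)%N -> (0 < Ny)%N ->
  0 < M -> 0 < beta -> 0 <= alpha -> 0 < dt ->
  let hx := Lx / Nx%:R in
  let hy := Ly / Ny%:R in
  0 < E1 hx hy (ztilde Z0 Z1) ->
  (* (i) unique solvability *)
  (exists! s : 'M[R]_(Nx, Ny) * 'M[R]_(Nx, Ny) * 'M[R]_(Nx, Ny) * R,
      scheme hx hy alpha M beta dt Z0 Z1 Psi1 R1 s.1.1.1 s.1.1.2 s.1.2 s.2)
  /\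
  (* (ii) mass conservation and (iii) energy dissipation *)
  (forall (Z2 Psi2 W : 'M[R]_(Nx, Ny)) (R2 : R),
      scheme hx hy alpha M beta dt Z0 Z1 Psi1 R1 Z2 Psi2 W R2 ->
      ipm hx hy Psi1 (ones R Nx Ny) = 0 ->
      [/\ ipm hx hy Psi2 (ones R Nx Ny) = 0,
          ipm hx hy Z2 (ones R Nx Ny) = ipm hx hy Z1 (ones R Nx Ny)
        & Etilde hx hy alpha M Z2 Z1 R2 Psi2 - Etilde hx hy alpha M Z1 Z0 R1 Psi1
          <= - (beta / M) * dt * hm1sq hx hy (avg Psi2 Psi1)]).

Proof.
move=> Lx0 Ly0 Nx0 Ny0 M0 b0 a0 dt0 hx hy E0.
have hx0 : 0 < hx by rewrite /hx divr_gt0 // ltr0n.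
have hy0 : 0 < hy by rewrite /hy divr_gt0 // ltr0n.
split.
  by apply: part_i.
move=> Z2 Psi2 W R2 Hs m1.
by move: Hs m1; apply: energy.
Qed.
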